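(* Let $G\neq \{0\}$ be a finite abelian group. Let $B$ be a zero-sum sequence over $G$ and let $g \in G\setminus \{0\}$. Then $\max \mathsf{L}(B(-g)g)= 1+\max \mathsf{L}(B)$. In particular, $\mathsf{D}_{k+1}(G)\ge \mathsf{D}_{k}(G)+ 2$ for each $k \in \mathbb{N}$. Moreover, if $C$ is a zero-sum sequence over $G$ with $\max \mathsf{L}(C)\le k$ and $|C|= \mathsf{D}_k(G)$, then $0$ does not occur as a term of $C$.
   Context: A sequence over $G$ is an element of the multiplicatively written free abelian monoid over $G$ (finite unordered list of elements with repetitions); $B(-g)g$ denotes $B$ with the two terms $-g$ and $g$ appended. Zero-sum means the terms sum to $0$; a minimal zero-sum sequence is a non-empty zero-sum sequence with no proper non-empty zero-sum subsequence; for a zero-sum sequence $B$, $\mathsf{L}(B)$ is the set of all $t$ such that $B$ is a product of $t$ minimal zero-sum sequences. $\mathsf{D}_k(G)$ is the smallest $\ell$ such that every sequence over $G$ of length at least $\ell$ has $k$ disjoint non-empty zero-sum subsequences. *)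

(* Defs.v *)
(* Finite abelian groups are written additively as finZmodType;
   sequences over G (elements of the free abelian monoid over G) are represented
   by lists [seq G], considered up to permutation (perm_eq). *)
From mathcomp Require Import all_boot all_order all_algebra.
Set Implicit Arguments. Unset Strict Implicit. Unset Printing Implicit Defensive.
Import GRing.Theory.
Local Open Scope ring_scope.

Section Defs.
Variable G : finZmodType.

Definition zero_sum (S : seq G) : Prop := \sum_(x <- S) x = 0.

Definition minimal_zero_sum (S : seq G) : Prop :=
  (0 < size S)%N /\ zero_sum S /\
  forall m : bitseq, (0 < size (mask m S))%N -> zero_sum (mask m S) ->
    size (mask m S) = size S.

Definition inL (B : seq G) (t : nat) : Prop :=
  exists fs : seq (seq G),
    size fs = t /\ (forall A, A \in fs -> minimal_zero_sum A) /\
    perm_eq (flatten fs) B.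

Definition is_maxL (B : seq G) (m : nat) : Prop :=
  inL B m /\ forall t, inL B t -> (t <= m)%N.

Definition has_disjoint_zs (k : nat) (S : seq G) : Prop :=
  exists fs : seq (seq G), exists rest : seq G,
    size fs = k /\ (forall A, A \in fs -> (0 < size A)%N /\ zero_sum A) /\
    perm_eq S (flatten fs ++ rest).

Definition Dk_prop (k l : nat) : Prop :=
  forall S : seq G, (l <= size S)%N -> has_disjoint_zs k S.

Definition is_Dk (k d : nat) : Prop :=
  Dk_prop k d /\ forall l, Dk_prop k l -> (d <= l)%N.

End Defs.

(* Main.v *)
Require Import Defs.
From mathcomp Require Import all_boot all_order all_algebra.
From mathcomp Require Import zify.
From Stdlib Require Import Classical.
Import GRing.Theory.
Local Open Scope ring_scope.
Set Implicit Arguments. Unset Strict Implicit. Unset Printing Implicit Defensive.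

Section Aux.
Variable G : finZmodType.
Implicit Types (A B S rest : seq G) (fs : seq (seq G)).

Lemma zs_perm A B : perm_eq A B -> zero_sum A -> zero_sum B.
Proof. by rewrite /zero_sum => /(perm_big _) ->. Qed.

Lemma zs_cat A B : zero_sum A -> zero_sum B -> zero_sum (A ++ B).
Proof. by move=> h1 h2; rewrite /zero_sum big_cat /= h1 h2 addr0. Qed.

Lemma zs_flatten fs : (forall A, A \in fs -> zero_sum A) -> zero_sum (flatten fs).
Proof.
elim: fs => [|A fs IH] H /=; first by rewrite /zero_sum big_nil.
apply: zs_cat; first by apply: H; rewrite inE eqxx.
by apply: IH => B HB; apply: H; rewrite inE HB orbT.
Qed.

Lemma inL_perm A B t : inL A t -> perm_eq A B -> inL B t.
Proof.
move=> [fs [h1 [h2 h3]]] hp; exists fs; split=> //; split=> //.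
exact: perm_trans h3 hp.
Qed.

Lemma inL_cat A B s t : inL A s -> inL B t -> inL (A ++ B) (s + t).
Proof.
move=> [fs [h1 [h2 h3]]] [gs [g1 [g2 g3]]]; exists (fs ++ gs); split.
  by rewrite size_cat h1 g1.
split; first by move=> C; rewrite mem_cat => /orP [] ?; [apply: h2|apply: g2].
by rewrite flatten_cat perm_cat.
Qed.

Lemma inL_atom A : minimal_zero_sum A -> inL A 1.
Proof. move=> h; exists [:: A]; split=> //; split; first by move=> C; rewrite inE => /eqP ->.
by rewrite /= cats0.
Qed.

Lemma inL_nil : @inL G [::] 0.
Proof. by exists [::]. Qed.

Lemma size_flatten_ge fs : (forall A, A \in fs -> 0 < size A)%N ->
  (size fs <= size (flatten fs))%N.
Proof.
elim: fs => [|A fs IH] H //=; rewrite size_cat.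
have h1 := H A (mem_head _ _).
have h2 : (size fs <= size (flatten fs))%N by apply: IH => B HB; apply: H; rewrite inE HB orbT.
lia.
Qed.

Lemma inL_size B t : inL B t -> (t <= size B)%N.
Proof.
move=> [fs [<- [h2 h3]]]; rewrite -(perm_size h3); apply: size_flatten_ge.
by move=> A /h2 [].
Qed.

Lemma minimal_pair (g : G) : g != 0 -> minimal_zero_sum [:: -g; g].
Proof.
move=> hg; split=> //; split; first by rewrite /zero_sum !big_cons big_nil /= addr0 addNr.
case=> [|[] [|[] m]] //=; rewrite /zero_sum ?mask0 ?big_cons ?big_nil /= ?addr0.
all: try (by case: m => [|[] m] //=).
all: try (by move=> _ /eqP; rewrite ?oppr_eq0 (negbTE hg)).


Qed.

Fixpoint cmask (m : bitseq) (B : seq G) : seq G :=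
  match m, B with
  | b :: m', x :: B' => if b then cmask m' B' else x :: cmask m' B'
  | [::], _ => B
  | _, [::] => [::]
  end.

Lemma cmask_perm m B : perm_eq B (mask m B ++ cmask m B).
Proof.
elim: B m => [|x B IH] [|[] m] /=; try by rewrite ?perm_refl ?mask0.
- by rewrite perm_cons.
- apply/permP => p /=; rewrite count_cat /=.
  by move/permP: (IH m) => /(_ p); rewrite count_cat => ->; rewrite addnCA.
Qed.

Ltac nlia := repeat match goal with |- context [nat_of_bool ?b] => move: (nat_of_bool b) => ? end; lia.

Lemma fact B : zero_sum B -> exists t, inL B t /\ (0 < size B -> 0 < t)%N.
Proof.
have [n] := ubnP (size B); elim: n B => // n IH B Hlt Hz.
case: (posnP (size B)) => [/size0nil -> | Hpos].
  by exists 0%N; split=> //; exact: inL_nil.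
case: (classic (minimal_zero_sum B)) => Hm.
  by exists 1%N; split=> //; apply: inL_atom.
have [m Hm'] : exists m : bitseq, ~ ((0 < size (mask m B))%N -> zero_sum (mask m B) -> size (mask m B) = size B).
  apply: not_all_ex_not => H; apply: Hm; split=> //.
have [h1 H'] := imply_to_and _ _ Hm'. have [h2 h3] := imply_to_and _ _ H'.
have hp := cmask_perm m B.
have hs := perm_size hp; rewrite size_cat in hs.
have hz2 : zero_sum (cmask m B).
  move: Hz; rewrite /zero_sum (perm_big _ hp) big_cat /=.
  by move: h2; rewrite /zero_sum => ->; rewrite add0r.
have hlt1 : (size (mask m B) < n)%N.
  clear -Hlt h3 hs; move: Hlt h3 hs; move: (size B) (size (mask m B)) (size (cmask m B)) => x y z ? ? ?; lia.
have hlt2 : (size (cmask m B) < n)%N.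
  clear -Hlt h1 hs; move: Hlt h1 hs; move: (size B) (size (mask m B)) (size (cmask m B)) => x y z ? ? ?; lia.
have [t1 [i1 p1]] := IH (mask m B) hlt1 h2.
have [t2 [i2 p2]] := IH (cmask m B) hlt2 hz2.
exists (t1 + t2)%N; split; last by move=> _; have := p1 h1; lia.
apply: (inL_perm (inL_cat i1 i2)); by rewrite perm_sym.
Qed.

Lemma split1 (x : G) S fs rest : perm_eq (x :: S) (flatten fs ++ rest) ->
  (exists r, perm_eq rest (x :: r) /\ perm_eq S (flatten fs ++ r)) \/
  (exists A A' fs0, perm_eq fs (A :: fs0) /\ perm_eq A (x :: A') /\
     perm_eq S (flatten fs0 ++ (A' ++ rest))).
Proof.
move=> hp; have : x \in flatten fs ++ rest by rewrite -(perm_mem hp) mem_head.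
rewrite mem_cat => /orP [/flattenP [A hA hxA] | hx].
- right; exists A, (rem x A), (rem A fs).
  have h1 := perm_to_rem hA. have h2 := perm_to_rem hxA.
  split=> //; split=> //.
  rewrite -(perm_cons x); apply: (perm_trans hp).
  apply/permP => p; move/permP: (perm_flatten h1) => /(_ p) /= e1.
  move/permP: h2 => /(_ p) /= e2.
  rewrite !count_cat /= in e1 *; rewrite e1 e2.
  move: (nat_of_bool (p x)) (count p (rem x A)) (count p (flatten (rem A fs))) (count p rest) => a b c d; lia.
- left; exists (rem x rest).
  have h2 := perm_to_rem hx; split=> //.
  rewrite -(perm_cons x); apply: (perm_trans hp).
  apply/permP => p; move/permP: h2 => /(_ p) /= e1.
  rewrite !count_cat /= e1.
  move: (nat_of_bool (p x)) (count p (rem x rest)) (count p (flatten fs)) => a b c; lia.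
Qed.

Definition pieces fs := forall A, A \in fs -> (0 < size A)%N /\ zero_sum A.

Lemma merge (x y : G) S fs rest : x != 0 -> x + y = 0 -> pieces fs ->
  perm_eq (x :: y :: S) (flatten fs ++ rest) ->
  exists fs' rest', (size fs <= (size fs').+1)%N /\ pieces fs' /\
     perm_eq S (flatten fs' ++ rest').
Proof.
move=> hx hxy hP hp.
case: (split1 hp) => [[r [hr hp1]] | [A [A' [fs0 [hfs [hA hp1]]]]]].
- case: (split1 hp1) => [[r2 [_ hp2]] | [B [B' [fs1 [hfs1 [hB hp2]]]]]].
  + by exists fs, r2; split=> //; apply: leqnSn.
  + exists fs1, (B' ++ r); split; first by rewrite (perm_size hfs1).
    split=> // C hC; apply: hP; by rewrite (perm_mem hfs1) inE hC orbT.
- have hP0 : pieces fs0 by move=> C hC; apply: hP; rewrite (perm_mem hfs) inE hC orbT.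
  have hsz : size fs = (size fs0).+1 by rewrite (perm_size hfs).
  case: (split1 hp1) => [[r2 [_ hp2]] | [B [B' [fs1 [hfs1 [hB hp2]]]]]].
  + by exists fs0, r2; split; [rewrite hsz | split].
  + have hP1 : pieces fs1 by move=> C hC; apply: hP0; rewrite (perm_mem hfs1) inE hC orbT.
    have [_ hAz] := hP A ltac:(by rewrite (perm_mem hfs) mem_head).
    have [_ hBz] := hP0 B ltac:(by rewrite (perm_mem hfs1) mem_head).
    have eA : x + \sum_(j <- A') j = 0.
      by move: hAz; rewrite /zero_sum (perm_big _ hA) big_cons.
    have eB : y + \sum_(j <- B') j = 0.
      by move: hBz; rewrite /zero_sum (perm_big _ hB) big_cons.
    have hA'pos : (0 < size A')%N.
      rewrite lt0n size_eq0; apply/eqP => E; move: eA; rewrite E big_nil addr0 => E2.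
      by rewrite E2 eqxx in hx.
    exists ((A' ++ B') :: fs1), rest; split; first by rewrite hsz (perm_size hfs1).
    split.
      move=> C; rewrite inE => /orP [/eqP -> | hC]; last exact: hP1.
      split; first by rewrite size_cat; apply: leq_trans hA'pos (leq_addr _ _).
      rewrite /zero_sum big_cat /=.
      have -> : \sum_(j <- A') j = -x by apply/eqP; rewrite -addr_eq0 addrC eA.
      have -> : \sum_(j <- B') j = -y by apply/eqP; rewrite -addr_eq0 addrC eB.
      by rewrite -opprD hxy oppr0.
    apply: (perm_trans hp2); apply/permP => p; rewrite /= !count_cat.
    move: (count p A') (count p B') (count p (flatten fs1)) (count p rest) => a b c d; lia.
Qed.

Lemma cov B fs rest : pieces fs -> zero_sum rest -> perm_eq B (flatten fs ++ rest) ->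
  exists t, (size fs <= t)%N /\ inL B t.
Proof.
move=> hP hr hp.
have [u [iu _]] := fact hr.
suff [t [ht it]] : exists t, (size fs <= t)%N /\ inL (flatten fs) t.
  exists (t + u)%N; split; first by apply: leq_trans ht (leq_addr _ _).
  by apply: (inL_perm (inL_cat it iu)); rewrite perm_sym.
clear hp; elim: fs hP => [|A fs IH] hP; first by exists 0%N; split=> //; exact: inL_nil.
have [hA1 hA2] := hP A (mem_head _ _).
have [t1 [i1 p1]] := fact hA2.
have [t2 [h2 i2]] := IH (fun C hC => hP C ltac:(by rewrite inE hC orbT)).
exists (t1 + t2)%N; split; last exact: inL_cat i1 i2.
have := p1 hA1; move: h2; rewrite /=; clear; move: t1 t2 (size fs) => a b c; lia.
Qed.

Lemma up B (g : G) t : zero_sum B -> g != 0 -> inL (B ++ [:: -g; g]) t ->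
  exists t', (t <= t'.+1)%N /\ inL B t'.
Proof.
move=> hB hg [fs [hs [hm hp]]].
have hP : pieces fs by move=> A /hm [h1 [h2 _]].
have hp' : perm_eq (-g :: g :: B) (flatten fs ++ [::]).
  rewrite cats0 perm_sym; apply: (perm_trans hp); apply/permP => p; rewrite count_cat /=.
  move: (nat_of_bool (p g)) (nat_of_bool (p (-g))) (count p B) => a b c; lia.
have [fs' [r' [h1 [h2 h3]]]] := merge (x:=-g) (y:=g) ltac:(by rewrite oppr_eq0) (addNr g) hP hp'.
have hr : zero_sum r'.
  have hf : zero_sum (flatten fs') by apply: zs_flatten => A /h2 [].
  move: hB; rewrite /zero_sum (perm_big _ h3) big_cat /=.
  by move: hf; rewrite /zero_sum => ->; rewrite add0r.
have [t' [ht it]] := cov h2 hr h3.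
exists t'; split => //; move: h1 ht; rewrite hs; clear; move: t (size fs') t' => a b c; lia.
Qed.

Lemma KL (g : G) k S : g != 0 -> has_disjoint_zs k.+1 [:: g, -g & S] -> has_disjoint_zs k S.
Proof.
move=> hg [fs [rest [hs [hP hp]]]].
have [fs' [r' [h1 [h2 h3]]]] := merge hg (subrr g) hP hp.
exists (take k fs'), (flatten (drop k fs') ++ r'); split.
  rewrite size_take; case: ltnP => //; move: h1; rewrite hs; move: (size fs') => a; lia.
split; first by move=> A /mem_take /h2.
by rewrite catA -flatten_cat cat_take_drop.
Qed.

End Aux.

Theorem lemma6p1 (G : finZmodType) (hG : (1 < #|G|)%N) :
  (forall (B : seq G) (g : G), zero_sum B -> g != 0 ->
     forall m : nat, is_maxL B m <-> is_maxL (B ++ [:: - g; g]) m.+1)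
  /\
  (forall (k d d' : nat), (1 <= k)%N -> is_Dk G k d -> is_Dk G k.+1 d' ->
     (d + 2 <= d')%N)
  /\
  (forall (k d : nat) (C : seq G), (1 <= k)%N -> is_Dk G k d ->
     zero_sum C -> (forall t, inL C t -> (t <= k)%N) -> size C = d ->
     (0 : G) \notin C).
Proof.
have [g hg] : exists g : G, g != 0.
  case: (pickP (fun x : G => x != 0)) => [g0 hg0|H]; first by exists g0.
  exfalso; move: hG; rewrite ltnNge => /negP; apply; apply/fintype_le1P => x y.
  by move/negbFE/eqP: (H y) ->; move/negbFE/eqP: (H x) ->.
split.
  move=> B h hB hh m; split.
  - move=> [iB hmax]; split.
      by have := inL_cat iB (inL_atom (minimal_pair hh)); rewrite addn1.
    move=> t it; have [t' [ht it']] := up hB hh it; have := hmax _ it'.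
    by clear -ht; move: t t' m ht => a b c; lia.
  - move=> [iB' hmax]; have [t' [ht it']] := up hB hh iB'.
    have ht' := hmax _ (inL_cat it' (inL_atom (minimal_pair hh))).
    have -> : m = t' by clear -ht ht'; move: ht ht'; rewrite addn1; move: m t' => a b; lia.
    split=> // t it; have := hmax _ (inL_cat it (inL_atom (minimal_pair hh))).
    move=> h1; move: ht ht' h1; clear; move: t m t' => a b c; lia.
split.
  move=> k d d' hk [hDk hmin] [hDk1 _].
  have hd : (1 <= d)%N.
    rewrite lt0n; apply/eqP => E; move: (hDk [::]); rewrite E => /(_ isT) [fs [rest [hs [hP hp]]]].
    case: fs hs hP hp => [|A fs] hs; first by move: hk; rewrite -hs.
    move=> hP hp; have := perm_size hp; have [h1 _] := hP A (mem_head _ _).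
    rewrite /= !size_cat; clear -h1; move: (size A) (size (flatten fs)) (size rest) h1 => a b c; lia.
  have hnot : ~ Dk_prop G k d.-1 by move=> /hmin; clear -hd; move: d hd => a; lia.
  have [S HS] := not_all_ex_not _ _ hnot.
  have [hSz hSn] := imply_to_and _ _ HS.
  rewrite leqNgt; apply/negP => hlt.
  apply: hSn; apply: (KL hg); apply: hDk1 => /=.
  clear -hSz hlt hd; move: hSz hlt hd; move: (size S) d d' => a b c; lia.
move=> k d C hk [hDk _] hC hmax hsz; apply/negP => h0.
have hd2 : (2 <= d)%N.
  rewrite leqNgt; apply/negP => hlt.
  have [fs [rest [hs [hP hp]]]] := hDk [:: g] ltac:(by rewrite /=; clear -hlt; move: d hlt => a; lia).
  case: fs hs hP hp => [|A fs] hs hP hp; first by move: hk; rewrite -hs.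
  have [h1 h2] := hP A (mem_head _ _).
  have hsz' := perm_size hp; rewrite /= !size_cat in hsz'.
  clear hs; case: A hP hp h1 h2 hsz' => [|a [|b A]] hP hp h1 h2 hsz'; first by [].
    2: by move: hsz'; rewrite /=; clear; move: (size A) (size (flatten fs)) (size rest) => u v w; lia.
  have ha : a = 0 by move: h2; rewrite /zero_sum big_cons big_nil /= addr0.
  have : a \in [:: g] by rewrite (perm_mem hp) /= inE eqxx.
  by rewrite inE => /eqP E; move: hg; rewrite -E ha eqxx.
have hC' := perm_to_rem h0.
have hsC := perm_size hC'; rewrite /= hsz in hsC.
case E: (rem 0 C) hC' hsC => [|x S'] hC' hsC.
  by move: hd2; rewrite hsC.
case: k hk hDk hmax => // k0 _ hDk hmax.
have [fs [rest [hs [hP hp]]]] : has_disjoint_zs k0 S'.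
  apply: (KL hg); apply: hDk => /=; rewrite /= in hsC; move: hsC hd2; clear; move: (size S') d => a b; lia.
have hzr : zero_sum (x :: rest).
  have hf : zero_sum (flatten fs) by apply: zs_flatten => A /hP [].
  move: hC; rewrite /zero_sum (perm_big _ hC') !big_cons (perm_big _ hp) big_cat /=.
  move: hf; rewrite /zero_sum => ->; by rewrite add0r add0r.
have hP' : pieces [:: [:: 0], x :: rest & fs].
  move=> A; rewrite !inE => /orP [/eqP -> | /orP [/eqP -> | hA]]; last exact: hP.
    by split=> //; rewrite /zero_sum big_cons big_nil /= addr0.
  by split.
have hpC : perm_eq C (flatten [:: [:: 0], x :: rest & fs] ++ [::]).
  apply: (perm_trans hC'); rewrite cats0 /=; apply/permP => p /=.
  move/permP: hp => /(_ p); rewrite !count_cat /= => ->.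
  move: (nat_of_bool (p 0)) (nat_of_bool (p x)) (count p rest) (count p (flatten fs)) => a b c d'; lia.
have z0 : zero_sum (@nil G) by rewrite /zero_sum big_nil.
have [t [ht it]] := cov hP' z0 hpC.
have := hmax _ it; move: ht; rewrite /= hs; clear; move: t k0 => a b; lia.
Qed.
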